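(* Let $P$ be a program, $s$ a state, $U\subseteq S$ and $\mathtt p\in[0,1)\cap\mathbb Q$. Then $\langle P,s\rangle\models\Box\,\mathbb P_{>\mathtt p}U$ if and only if there exists $n\in\mathbb N$ such that every $\mu\in F_n(P,s)$ satisfies $\mu(U)>\mathtt p$.
   Context: Setting: a set $S$ of states; finitely supported (sub)probability distributions $\mathcal V_{=1,\omega}(X)$, $\mathcal V_{\le1,\omega}(X)$ written $\sum_ip_i\cdot x_i$, $\bot$ zero distribution, $\delta_s$ point mass. Programs $P::=\mathtt{skip}\mid\mathtt a\mid P;P\mid P\parallel P\mid P+_{\mathtt p}P\mid P+P\mid\mathtt{if}\ \mathtt b\ \mathtt{then}\ P\ \mathtt{else}\ P\mid\mathtt{while}\ \mathtt b\ P$ with given $[\![\mathtt a]\!]:S\to\mathcal V_{=1,\omega}(S)$, $[\![\mathtt b]\!]:S\to\{\mathtt{tt},\mathtt{ff}\}$. Small-step $\longrightarrow\subseteq(\mathrm{Pr}\times S)\times\mathcal V_{=1,\omega}(S+\mathrm{Pr}\times S)$: least relation with $\langle\mathtt a,s\rangle\to[\![\mathtt a]\!](s)$; $\langle\mathtt{skip},s\rangle\to1\cdot s$; if $\langle P,s\rangle\to\sum_ip_i\langle P_i,s_i\rangle+\sum_jp_js_j$ then $\langle P;Q,s\rangle\to\sum_ip_i\langle P_i;Q,s_i\rangle+\sum_jp_j\langle Q,s_j\rangle$ and $\langle P\parallel Q,s\rangle\to\sum_ip_i\langle P_i\parallel Q,s_i\rangle+\sum_jp_j\langle Q,s_j\rangle$;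 symmetric rule for $\parallel$ with $Q$ stepping (residual $P$); $\langle P+_{\mathtt p}Q,s\rangle\to\mathtt p\mu+(1-\mathtt p)\nu$ if $\langle P,s\rangle\to\mu,\langle Q,s\rangle\to\nu$; $\langle P+Q,s\rangle\to\mu$ if $\langle P,s\rangle\to\mu$ or $\langle Q,s\rangle\to\mu$; $\mathtt{if}$ steps with probability 1 to $\langle P,s\rangle$/$\langle Q,s\rangle$ according to $[\![\mathtt b]\!](s)$; $\langle\mathtt{while}\ \mathtt b\ P,s\rangle\to1\cdot\langle P;\mathtt{while}\ \mathtt b\ P,s\rangle$ if $\mathtt{tt}$, $\to1\cdot s$ if $\mathtt{ff}$. Schedulers: partial maps $\mathcal S$ from $I=((\mathrm{Pr}\times S)\times\mathcal V_{=1,\omega}(S+\mathrm{Pr}\times S))^*\times(\mathrm{Pr}\times S)$ (elements $h\langle P,s\rangle$) to $\mathcal V_{=1,\omega}(S+\mathrm{Pr}\times S)$ whose value at $h\langle P,s\rangle$ (if defined) is a finite convex combination of $\{\mu\mid\langle P,s\rangle\to\mu\}$. Big-step: $h\langle P,s\rangle\Downarrow^{\mathcal S,0}\bot$; $h\langle P,s\rangle\Downarrow^{\mathcal S,n+1}\sum_kp_k(\sum_ip_{k,i}\mu_{k,i}+\sum_jp_{k,j}s_{k,j})$ whenever $\mathcal S(h\langle P,s\rangle)=\sum_kp_k\nu_k$, $\nu_k=\sum_ip_{k,i}\langle P_{k,i},s_{k,i}\rangle+\sum_jp_{k,j}s_{k,j}$, and $h\langle P,s\rangle\nu_k\langle P_{k,i},s_{k,i}\rangle\Downarrow^{\mathcal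 S,n}\mu_{k,i}$ for all $k,i$. $\mathcal S$ is non-blocking w.r.t. $\langle P,s\rangle$ if for every $n$ some $\mu$ has $\langle P,s\rangle\Downarrow^{\mathcal S,n}\mu$. $\langle P,s\rangle\models\Box\,\mathbb P_{>\mathtt p}U$ means: for every scheduler $\mathcal S$ non-blocking w.r.t. $\langle P,s\rangle$ there exist $n\in\mathbb N$ and $\mu$ with $\langle P,s\rangle\Downarrow^{\mathcal S,n}\mu$ and $\mu(U)>\mathtt p$. Sets $F_n(P,s)$: $F_0=\{\bot\}$, $F_{n+1}(P,s)=\bigcup\{\sum_ip_i\cdot F_n(P_i,s_i)+\sum_jp_j\cdot\delta_{s_j}\mid\langle P,s\rangle\to\sum_ip_i\langle P_i,s_i\rangle+\sum_jp_js_j\}$ (Minkowski sums/scalings). *)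

(* Defs.v *)
From Stdlib Require Import Reals List QArith Qreals Classical ClassicalEpsilon.
Import ListNotations.
Set Implicit Arguments.
Open Scope R_scope.

Definition cdec (A : Prop) : bool :=
  if excluded_middle_informative A then true else false.

(** Finite formal sums  sum_i p_i . x_i  (a representation of a finitely
    supported (sub)measure); the measure they denote is [wt]. *)
Definition fsum (X : Type) := list (R * X).

Definition wt {X : Type} (l : fsum X) (x : X) : R :=
  fold_right (fun e acc => (if cdec (snd e = x) then fst e else 0) + acc) 0 l.

Definition mass {X : Type} (l : fsum X) (U : X -> Prop) : R :=
  fold_right (fun e acc => (if cdec (U (snd e)) then fst e else 0) + acc) 0 l.

Definition scale {X : Type} (p : R) (l : fsum X) : fsum X :=
  map (fun e => (p * fst e, snd e)) l.

Definition total {X : Type} (l : fsum X) : R :=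
  fold_right (fun e acc => fst e + acc) 0 l.

Definition is_prob {X : Type} (l : fsum X) : Prop :=
  Forall (fun e => 0 <= fst e) l /\ total l = 1.

Definition canon {X : Type} (c : fsum X) (mu : X -> R) : Prop :=
  NoDup (map snd c) /\ Forall (fun e => 0 < fst e) c /\
  (forall x, wt c x = mu x).

Inductive Prog (Act Test : Type) : Type :=
| Skip
| Atom (a : Act)
| Seq (P1 P2 : Prog Act Test)
| Par (P1 P2 : Prog Act Test)
| PChoice (p : Q) (P1 P2 : Prog Act Test)
| NChoice (P1 P2 : Prog Act Test)
| Ite (b : Test) (P1 P2 : Prog Act Test)
| While (b : Test) (P : Prog Act Test).

Arguments Skip {Act Test}.
Arguments Atom {Act Test} a.
Arguments Seq {Act Test} P1 P2.
Arguments Par {Act Test} P1 P2.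
Arguments PChoice {Act Test} p P1 P2.
Arguments NChoice {Act Test} P1 P2.
Arguments Ite {Act Test} b P1 P2.
Arguments While {Act Test} b P.

Fixpoint wf_prog {Act Test : Type} (P : Prog Act Test) : Prop :=
  match P with
  | Skip | Atom _ => True
  | Seq P1 P2 | Par P1 P2 | NChoice P1 P2 | Ite _ P1 P2 => wf_prog P1 /\ wf_prog P2
  | PChoice p P1 P2 => 0 <= Q2R p <= 1 /\ wf_prog P1 /\ wf_prog P2
  | While _ P1 => wf_prog P1
  end.

Section Semantics.
Variables (Act Test St : Type).
Variable semA : Act -> St -> fsum St.
Variable semB : Test -> St -> bool.

Notation Pr := (Prog Act Test).
Definition Out := (St + (Pr * St))%type.

Definition seqk (Q : Pr) (e : R * Out) : R * Out :=
  (fst e, match snd e with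
          | inl t => inr (Q, t)
          | inr (P', t) => inr (Seq P' Q, t) end).
Definition parl (Q : Pr) (e : R * Out) : R * Out :=
  (fst e, match snd e with
          | inl t => inr (Q, t)
          | inr (P', t) => inr (Par P' Q, t) end).
Definition parr (P : Pr) (e : R * Out) : R * Out :=
  (fst e, match snd e with
          | inl t => inr (P, t)
          | inr (Q', t) => inr (Par P Q', t) end).

Inductive stepL : Pr -> St -> fsum Out -> Prop :=
| st_atom a s : stepL (Atom a) s (map (fun e => (fst e, inl (snd e))) (semA a s))
| st_skip s : stepL Skip s [(1, inl s)]
| st_seq P1 P2 s l : stepL P1 s l -> stepL (Seq P1 P2) s (map (seqk P2) l)
| st_parl P1 P2 s l : stepL P1 s l -> stepL (Par P1 P2) s (map (parl P2) l)
| st_parr P1 P2 s l : stepL P2 s l -> stepL (Par P1 P2) s (map (parr P1) l)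
| st_pch p P1 P2 s l1 l2 : stepL P1 s l1 -> stepL P2 s l2 ->
    stepL (PChoice p P1 P2) s (scale (Q2R p) l1 ++ scale (1 - Q2R p) l2)
| st_nchl P1 P2 s l : stepL P1 s l -> stepL (NChoice P1 P2) s l
| st_nchr P1 P2 s l : stepL P2 s l -> stepL (NChoice P1 P2) s l
| st_ift b P1 P2 s : semB b s = true -> stepL (Ite b P1 P2) s [(1, inr (P1, s))]
| st_iff b P1 P2 s : semB b s = false -> stepL (Ite b P1 P2) s [(1, inr (P2, s))]
| st_whilet b P s : semB b s = true ->
    stepL (While b P) s [(1, inr (Seq P (While b P), s))]
| st_whilef b P s : semB b s = false -> stepL (While b P) s [(1, inl s)].

Definition stepD (P : Pr) (s : St) (mu : Out -> R) : Prop :=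
  exists l, stepL P s l /\ forall o, mu o = wt l o.

(** Given, for each (p, x) of a canonical decomposition, the residual sets
    F(P',t) for x = <P',t>, [combF F c mu] says that mu is in
    sum_i p_i . F(P_i,s_i) + sum_j p_j . delta_{s_j}. *)
Fixpoint combF (F : Pr -> St -> fsum St -> Prop) (c : fsum Out) (mu : fsum St)
  : Prop :=
  match c with
  | [] => mu = []
  | (p, inl t) :: c' => exists mu', combF F c' mu' /\ mu = (p, t) :: mu'
  | (p, inr (P', t)) :: c' =>
      exists m mu', F P' t m /\ combF F c' mu' /\ mu = scale p m ++ mu'
  end.

Fixpoint Fn (n : nat) (P : Pr) (s : St) (mu : fsum St) : Prop :=
  match n with
  | O => mu = []
  | S n' => exists l c, stepL P s l /\ canon c (wt l) /\ combF (Fn n') c mu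
  end.

(** Histories h = (<P0,s0>,nu0) ... (<Pk,sk>,nuk); an element of I is a pair
    (h, <P,s>). *)
Definition Hist := list ((Pr * St) * (Out -> R)).
Definition Sched := Hist -> Pr -> St -> option (Out -> R).

Definition convex_comb (ks : list (R * (Out -> R))) (P : Pr) (s : St)
  (nu : Out -> R) : Prop :=
  Forall (fun k => 0 <= fst k /\ stepD P s (snd k)) ks /\
  fold_right (fun k acc => fst k + acc) 0 ks = 1 /\
  (forall o, nu o = fold_right (fun k acc => fst k * snd k o + acc) 0 ks).

Definition valid_sched (sch : Sched) : Prop :=
  forall h P s nu, sch h P s = Some nu -> exists ks, convex_comb ks P s nu.

Fixpoint combK (G : R * (Out -> R) -> fsum St -> Prop)
  (ks : list (R * (Out -> R))) (mu : fsum St) : Prop :=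
  match ks with
  | [] => mu = []
  | k :: ks' => exists m mu', G k m /\ combK G ks' mu' /\ mu = scale (fst k) m ++ mu'
  end.

Fixpoint bigstep (sch : Sched) (n : nat) (h : Hist) (P : Pr) (s : St)
  (mu : fsum St) : Prop :=
  match n with
  | O => mu = []
  | S n' =>
      exists nu ks, sch h P s = Some nu /\ convex_comb ks P s nu /\
        combK (fun k muk => exists c, canon c (snd k) /\
                 combF (fun P' t m => bigstep sch n' (h ++ [((P, s), snd k)]) P' t m)
                       c muk)
              ks mu
  end.

Definition nonblocking (sch : Sched) (P : Pr) (s : St) : Prop :=
  forall n, exists mu, bigstep sch n [] P s mu.

Definition sat_box (P : Pr) (s : St) (U : St -> Prop) (p : R) : Prop :=
  forall sch, valid_sched sch -> nonblocking sch P s ->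
    exists n mu, bigstep sch n [] P s mu /\ mass mu U > p.

End Semantics.

(* Main.v *)
Require Import Defs.
From Stdlib Require Import Reals List QArith Qreals Lra Lia Classical ClassicalEpsilon.
Import ListNotations.
Open Scope R_scope.

Ltac cdestr := unfold cdec in *; repeat (destruct excluded_middle_informative; try congruence).

Lemma cdec_t (A : Prop) : A -> cdec A = true.
Proof. intros; cdestr. Qed.
Lemma cdec_f (A : Prop) : ~ A -> cdec A = false.
Proof. intros; cdestr. Qed.

Lemma wt_app {X} (l1 l2 : fsum X) x : wt (l1 ++ l2) x = wt l1 x + wt l2 x.
Proof. induction l1; simpl; [ring | rewrite IHl1; ring]. Qed.
Lemma wt_scale {X} p (l : fsum X) x : wt (scale p l) x = p * wt l x.
Proof. induction l; simpl; [ring|]. rewrite IHl. cdestr; ring. Qed.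
Lemma mass_app {X} (l1 l2 : fsum X) U : mass (l1 ++ l2) U = mass l1 U + mass l2 U.
Proof. induction l1; simpl; [ring | rewrite IHl1; ring]. Qed.
Lemma mass_scale {X} p (l : fsum X) U : mass (scale p l) U = p * mass l U.
Proof. induction l; simpl; [ring|]. rewrite IHl. cdestr; ring. Qed.
Lemma total_app {X} (l1 l2 : fsum X) : total (l1 ++ l2) = total l1 + total l2.
Proof. induction l1; simpl; [ring | rewrite IHl1; ring]. Qed.
Lemma total_scale {X} p (l : fsum X) : total (scale p l) = p * total l.
Proof. induction l; simpl; [ring|]. rewrite IHl. ring. Qed.

Lemma wt_notin {X} (l : fsum X) x : ~ In x (map snd l) -> wt l x = 0.
Proof.
  induction l; simpl; auto. intros H. cdestr.
  - exfalso; apply H; left; auto.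
  - rewrite IHl; [ring|tauto].
Qed.

Lemma wt_pos {X} (c : fsum X) x : (forall e, In e c -> 0 < fst e) ->
  0 <= wt c x /\ (In x (map snd c) -> 0 < wt c x).
Proof.
  induction c as [|e c IH]; simpl; intros H.
  - split; [lra| tauto].
  - destruct IH as [IH1 IH2]; [intros; apply H; auto|].
    assert (0 < fst e) by (apply H; auto).
    split; cdestr; try lra. intros [Hx|Hx]; [congruence|]. specialize (IH2 Hx); lra.
Qed.

Definition vl {X} (g : X -> R) (l : fsum X) : R :=
  fold_right (fun e acc => fst e * g (snd e) + acc) 0 l.

Lemma vl_app {X} g (l1 l2 : fsum X) : vl g (l1 ++ l2) = vl g l1 + vl g l2.
Proof. induction l1; simpl; [ring | rewrite IHl1; ring]. Qed.
Lemma vl_scale {X} g p (l : fsum X) : vl g (scale p l) = p * vl g l.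
Proof. induction l; simpl; [ring|]. rewrite IHl. ring. Qed.

Definition sumD {X} (D : list X) (f : X -> R) : R :=
  fold_right (fun x acc => f x + acc) 0 D.

Lemma sumD_plus {X} (D : list X) f g : sumD D (fun x => f x + g x) = sumD D f + sumD D g.
Proof. induction D; simpl; [ring| rewrite IHD; ring]. Qed.
Lemma sumD_ext {X} (D : list X) f g : (forall x, In x D -> f x = g x) -> sumD D f = sumD D g.
Proof. induction D; simpl; intros H; auto. rewrite H, IHD; auto. Qed.
Lemma sumD_zero {X} (D : list X) f : (forall x, In x D -> f x = 0) -> sumD D f = 0.
Proof. induction D; simpl; intros H; auto. rewrite H, IHD; auto. ring. Qed.
Lemma sumD_delta {X} (D : list X) (y : X) a g : NoDup D -> In y D ->
  sumD D (fun x => (if cdec (y = x) then a else 0) * g x) = a * g y.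
Proof.
  induction D as [|z D IH]; simpl; intros Hn Hi; [tauto|].
  inversion Hn; subst.
  destruct Hi as [Hi|Hi].
  - subst. rewrite sumD_zero. { cdestr; ring. }
    intros x Hx. cdestr; try (subst; tauto); ring.
  - rewrite IH; auto. cdestr; try (subst; tauto); ring.
Qed.

Lemma vl_sumD {X} (g : X -> R) (l : fsum X) D : NoDup D ->
  (forall y, In y (map snd l) -> In y D) -> vl g l = sumD D (fun x => wt l x * g x).
Proof.
  induction l as [|e l IH]; simpl; intros Hn Hi.
  - rewrite sumD_zero; auto. intros; ring.
  - rewrite (sumD_ext D _ (fun x => (if cdec (snd e = x) then fst e else 0) * g x + wt l x * g x)).
    2:{ intros; ring. }
    rewrite sumD_plus, sumD_delta, IH; auto.
Qed.

Definition odec {X : Type} (x y : X) : {x = y} + {x <> y} := excluded_middle_informative (x = y).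

Lemma vl_wt_eq {X} (g : X -> R) (l1 l2 : fsum X) : (forall x, wt l1 x = wt l2 x) ->
  vl g l1 = vl g l2.
Proof.
  intros H.
  set (D := nodup odec (map snd l1 ++ map snd l2)).
  assert (HD : NoDup D) by apply NoDup_nodup.
  rewrite (vl_sumD g l1 D), (vl_sumD g l2 D); auto.
  - apply sumD_ext. intros; rewrite H; auto.
  - intros y Hy; apply nodup_In, in_or_app; auto.
  - intros y Hy; apply nodup_In, in_or_app; auto.
Qed.

Definition upd {X} (e : R * X) (c : fsum X) : fsum X :=
  map (fun d => if cdec (snd d = snd e) then (fst d + fst e, snd d) else d) c.

Lemma upd_snd {X} (e : R * X) c : map snd (upd e c) = map snd c.
Proof. induction c; simpl; auto. rewrite IHc. cdestr; simpl; congruence. Qed.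

Lemma upd_notin {X} (e : R * X) c : ~ In (snd e) (map snd c) -> upd e c = c.
Proof.
  induction c; simpl; auto. intros H. rewrite IHc by tauto. cdestr.
  exfalso; apply H; left; auto.
Qed.

Lemma upd_wt {X} (e : R * X) c x : NoDup (map snd c) -> In (snd e) (map snd c) ->
  wt (upd e c) x = wt c x + (if cdec (snd e = x) then fst e else 0).
Proof.
  induction c as [|d c IH]; intros Hn Hi; [destruct Hi|].
  simpl in Hn, Hi. inversion Hn; subst.
  assert (Hu: upd e (d::c) = (if cdec (snd d = snd e) then (fst d + fst e, snd d) else d) :: upd e c) by reflexivity.
  rewrite Hu. destruct (classic (snd d = snd e)) as [Hde|Hde].
  - rewrite (cdec_t _ Hde). rewrite upd_notin by congruence. simpl. rewrite <- Hde. cdestr; ring.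
  - rewrite (cdec_f _ Hde). destruct Hi as [Hi|Hi]; [congruence|]. simpl. rewrite IH by auto. ring.
Qed.

Lemma canon_ex {X} (l : fsum X) : (forall e, In e l -> 0 <= fst e) -> exists c, canon c (wt l).
Proof.
  induction l as [|e l IH]; intros Hl.
  - exists []. split; [constructor|split; [constructor|]]. intros; reflexivity.
  - destruct IH as [c [Hn [Hp Hw]]]; [intros; apply Hl; simpl; auto|].
    assert (He : 0 <= fst e) by (apply Hl; simpl; auto).
    destruct (Rle_lt_or_eq_dec _ _ He) as [Hlt|Heq].
    + destruct (classic (In (snd e) (map snd c))) as [Hin|Hnin].
      * exists (upd e c). split; [|split].
        -- rewrite upd_snd; auto.
        -- rewrite Forall_forall in *. intros d Hd. unfold upd in Hd.
           apply in_map_iff in Hd. destruct Hd as [d0 [<- Hd0]].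
           specialize (Hp _ Hd0). cdestr. simpl; lra.
        -- intros x. rewrite upd_wt by auto. rewrite Hw. simpl. ring.
      * exists (e :: c). split; [|split].
        -- simpl; constructor; auto.
        -- constructor; auto.
        -- intros x. simpl. rewrite Hw. reflexivity.
    + exists c. split; [auto|split; auto]. intros x. simpl. rewrite Hw, <- Heq. cdestr; ring.
Qed.

Fixpoint minl (xs : list R) : R :=
  match xs with
  | [] => 0
  | [x] => x
  | x :: xs' => Rmin x (minl xs')
  end.

Lemma minl_le xs x : In x xs -> minl xs <= x.
Proof.
  induction xs as [|y xs IH]; simpl; [tauto|]. intros [<-|H].
  - destruct xs; [lra| apply Rmin_l].
  - destruct xs; [destruct H|]. specialize (IH H). eapply Rle_trans; [apply Rmin_r|]; auto.
Qed.

Lemma minl_in xs : xs <> [] -> In (minl xs) xs.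
Proof.
  induction xs as [|y xs IH]; simpl; [tauto|]. intros _.
  destruct xs as [|z xs]; [left; auto|].
  unfold Rmin. destruct Rle_dec; [left; auto| right; apply IH; discriminate].
Qed.

Lemma common_N {A} (L : list A) (Q : nat -> A -> Prop) :
  (forall n m a, (n <= m)%nat -> Q n a -> Q m a) ->
  (forall a, In a L -> exists n, Q n a) -> exists N, forall a, In a L -> Q N a.
Proof.
  intros Hm. induction L as [|a L IH]; intros H.
  - exists 0%nat; simpl; tauto.
  - destruct IH as [N HN]; [intros; apply H; simpl; auto|].
    destruct (H a) as [n Hn]; [simpl; auto|].
    exists (Nat.max n N). intros b [<-|Hb].
    + eapply Hm; [|eauto]; lia.
    + eapply Hm; [|eauto]; lia.
Qed.

Definition approx (a : nat -> R) (L : R) : Prop :=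
  (forall n, a n <= L) /\ (forall n, a n <= a (S n)) /\
  (forall eps, eps > 0 -> exists n, L - eps < a n).

Lemma approx_mono a L n m : approx a L -> (n <= m)%nat -> a n <= a m.
Proof.
  intros [_ [H _]] Hnm. induction Hnm; [lra|]. eapply Rle_trans; eauto.
Qed.

Lemma approx_const c : approx (fun _ => c) c.
Proof. split; [intros; lra|split; [intros; lra|]]. intros eps He; exists 0%nat; lra. Qed.

Lemma approx_plus a b L M : approx a L -> approx b M -> approx (fun n => a n + b n) (L + M).
Proof.
  intros Ha Hb. pose proof Ha as [Ha1 [Ha2 Ha3]]. pose proof Hb as [Hb1 [Hb2 Hb3]].
  split; [intros n; specialize (Ha1 n); specialize (Hb1 n); lra|].
  split; [intros n; specialize (Ha2 n); specialize (Hb2 n); lra|].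
  intros eps He. destruct (Ha3 (eps/2)) as [n1 H1]; [lra|].
  destruct (Hb3 (eps/2)) as [n2 H2]; [lra|].
  exists (Nat.max n1 n2).
  assert (a n1 <= a (Nat.max n1 n2)) by (apply (approx_mono a L); auto; lia).
  assert (b n2 <= b (Nat.max n1 n2)) by (apply (approx_mono b M); auto; lia).
  lra.
Qed.

Lemma approx_scale a L w : 0 <= w -> approx a L -> approx (fun n => w * a n) (w * L).
Proof.
  intros Hw [H1 [H2 H3]].
  split; [intros n; apply Rmult_le_compat_l; auto|].
  split; [intros n; apply Rmult_le_compat_l; auto|].
  intros eps He. destruct (Rle_lt_or_eq_dec _ _ Hw) as [Hw'|Hw'].
  - destruct (H3 (eps / w)) as [n Hn]. { apply Rdiv_lt_0_compat; lra. }
    exists n. assert (w * (L - eps / w) < w * a n) by (apply Rmult_lt_compat_l; auto).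
    replace (w * (L - eps / w)) with (w * L - eps) in H by (field; lra). lra.
  - subst. exists 0%nat. lra.
Qed.

Section Main.
Variables (Act Test St : Type) (semA : Act -> St -> fsum St) (semB : Test -> St -> bool).
Hypothesis HsemA : forall a s, is_prob (semA a s).
Variable U : St -> Prop.

Notation Pr := (Prog Act Test).
Notation Ot := (Out Act Test St).

Fixpoint steps (P : Pr) (s : St) : list (fsum Ot) :=
  match P with
  | Skip => [[(1, inl s)]]
  | Atom a => [map (fun e => (fst e, inl (snd e))) (semA a s)]
  | Seq P1 P2 => map (map (seqk P2)) (steps P1 s)
  | Par P1 P2 => map (map (parl P2)) (steps P1 s) ++ map (map (parr P1)) (steps P2 s)
  | PChoice q P1 P2 => flat_map (fun l1 => map (fun l2 =>
        scale (Q2R q) l1 ++ scale (1 - Q2R q) l2) (steps P2 s)) (steps P1 s)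
  | NChoice P1 P2 => steps P1 s ++ steps P2 s
  | Ite b P1 P2 => if semB b s then [[(1, inr (P1, s))]] else [[(1, inr (P2, s))]]
  | While b P1 => if semB b s then [[(1, inr (Seq P1 (While b P1), s))]] else [[(1, inl s)]]
  end.

Lemma steps_complete P s l : stepL semA semB P s l -> In l (steps P s).
Proof.
  induction 1; simpl; auto.
  - apply in_map; auto.
  - apply in_or_app; left; apply in_map; auto.
  - apply in_or_app; right; apply in_map; auto.
  - apply in_flat_map. exists l1; split; auto. apply in_map_iff. exists l2; auto.
  - apply in_or_app; auto.
  - apply in_or_app; auto.
  - rewrite H; simpl; auto.
  - rewrite H; simpl; auto.
  - rewrite H; simpl; auto.
  - rewrite H; simpl; auto.
Qed.

Lemma steps_sound P s l : In l (steps P s) -> stepL semA semB P s l.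
Proof.
  revert l. induction P; simpl; intros l H.
  - destruct H as [<-|[]]; constructor.
  - destruct H as [<-|[]]; constructor.
  - apply in_map_iff in H; destruct H as [l0 [<- H]]; constructor; auto.
  - apply in_app_iff in H; destruct H as [H|H]; apply in_map_iff in H;
      destruct H as [l0 [<- H]]; [apply st_parl|apply st_parr]; auto.
  - apply in_flat_map in H; destruct H as [l1 [H1 H2]]; apply in_map_iff in H2;
      destruct H2 as [l2 [<- H2]]; constructor; auto.
  - apply in_app_iff in H; destruct H as [H|H]; [apply st_nchl|apply st_nchr]; auto.
  - destruct (semB b s) eqn:E; destruct H as [<-|[]]; constructor; auto.
  - destruct (semB b s) eqn:E; destruct H as [<-|[]]; constructor; auto.
Qed.

Lemma steps_nonempty P s : steps P s <> [].
Proof.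
  induction P; simpl; try discriminate.
  - destruct (steps P1 s); [congruence|discriminate].
  - destruct (steps P1 s); [congruence|discriminate].
  - destruct (steps P1 s); [congruence|]. simpl. destruct (steps P2 s); [congruence|discriminate].
  - destruct (steps P1 s); [congruence|discriminate].
  - destruct (semB b s); discriminate.
  - destruct (semB b s); discriminate.
Qed.

Definition wfo (o : Ot) : Prop :=
  match o with inl _ => True | inr (P', _) => wf_prog P' end.

Lemma total_map {X Y} (h : R * X -> R * Y) l : (forall e, fst (h e) = fst e) ->
  total (map h l) = total l.
Proof. intros H; induction l; simpl; auto. rewrite IHl, H; auto. Qed.

Lemma step_good P s l : wf_prog P -> stepL semA semB P s l ->
  (forall e, In e l -> 0 <= fst e /\ wfo (snd e)) /\ total l = 1.
Proof.
  intros HP Hs; revert HP; induction Hs; simpl; intros HP.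
  - destruct (HsemA a s) as [Hf Ht]. rewrite Forall_forall in Hf. split.
    + intros e He. apply in_map_iff in He. destruct He as [e0 [<- He0]]. simpl.
      split; try apply Hf; auto.
    + rewrite total_map; auto.
  - split; [|ring]. intros e [<-|[]]; simpl; split; auto; lra.
  - destruct HP as [H1 H2]. destruct (IHHs H1) as [Hg Ht]. split.
    + intros e He. apply in_map_iff in He. destruct He as [e0 [<- He0]].
      destruct (Hg e0 He0) as [Hn Hw]. unfold seqk; simpl. split; auto.
      destruct (snd e0) as [t|[P' t]]; simpl in *; auto.
    + rewrite total_map; auto.
  - destruct HP as [H1 H2]. destruct (IHHs H1) as [Hg Ht]. split.
    + intros e He. apply in_map_iff in He. destruct He as [e0 [<- He0]].
      destruct (Hg e0 He0) as [Hn Hw]. unfold parl; simpl. split; auto.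
      destruct (snd e0) as [t|[P' t]]; simpl in *; auto.
    + rewrite total_map; auto.
  - destruct HP as [H1 H2]. destruct (IHHs H2) as [Hg Ht]. split.
    + intros e He. apply in_map_iff in He. destruct He as [e0 [<- He0]].
      destruct (Hg e0 He0) as [Hn Hw]. unfold parr; simpl. split; auto.
      destruct (snd e0) as [t|[P' t]]; simpl in *; auto.
    + rewrite total_map; auto.
  - destruct HP as [Hq [H1 H2]]. destruct (IHHs1 H1) as [Hg1 Ht1].
    destruct (IHHs2 H2) as [Hg2 Ht2]. split.
    + intros e He. apply in_app_iff in He.
      destruct He as [He|He]; apply in_map_iff in He; destruct He as [e0 [<- He0]]; simpl.
      * destruct (Hg1 e0 He0). split; auto. apply Rmult_le_pos; lra.
      * destruct (Hg2 e0 He0). split; auto. apply Rmult_le_pos; lra.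
    + rewrite total_app, !total_scale, Ht1, Ht2. ring.
  - apply IHHs; tauto.
  - apply IHHs; tauto.
  - split; [|ring]. intros e [<-|[]]; simpl; split; try lra; tauto.
  - split; [|ring]. intros e [<-|[]]; simpl; split; try lra; tauto.
  - split; [|ring]. intros e [<-|[]]; simpl; split; try lra; tauto.
  - split; [|ring]. intros e [<-|[]]; simpl; split; auto; lra.
Qed.

Definition indU (t : St) : R := if cdec (U t) then 1 else 0.
Definition gV (G : Pr -> St -> R) (o : Ot) : R :=
  match o with inl t => indU t | inr (P', t) => G P' t end.

Fixpoint V (n : nat) (P : Pr) (s : St) : R :=
  match n with
  | O => 0
  | S n' => minl (map (fun l => vl (gV (V n')) l) (steps P s))
  end.

Lemma minl_attain {A} (f : A -> R) L : L <> [] -> exists a, In a L /\ minl (map f L) = f a.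
Proof.
  intros HL. assert (Hm : map f L <> []) by (destruct L; [congruence|discriminate]).
  pose proof (minl_in _ Hm) as H. apply in_map_iff in H. destruct H as [a [Ha Hin]].
  exists a; split; auto.
Qed.

Lemma minl_mono {A} (f f' : A -> R) L : L <> [] -> (forall a, In a L -> f a <= f' a) ->
  minl (map f L) <= minl (map f' L).
Proof.
  intros HL H. destruct (minl_attain f' L HL) as [a [Ha ->]].
  eapply Rle_trans; [apply minl_le, in_map; eauto| auto].
Qed.

Lemma vl_bound (g : Ot -> R) l : (forall e, In e l -> 0 <= fst e /\ 0 <= g (snd e) <= 1) ->
  0 <= vl g l <= total l.
Proof.
  induction l as [|e l IH]; simpl; intros H; [lra|].
  destruct (H e) as [H1 H2]; auto. destruct IH as [I1 I2]; [intros; apply H; auto|].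
  split; nra.
Qed.

Lemma vl_mono (g g' : Ot -> R) l : (forall e, In e l -> 0 <= fst e /\ g (snd e) <= g' (snd e)) ->
  vl g l <= vl g' l.
Proof.
  induction l as [|e l IH]; simpl; intros H; [lra|].
  destruct (H e) as [H1 H2]; auto. assert (vl g l <= vl g' l) by (apply IH; intros; apply H; auto).
  nra.
Qed.

Lemma indU_bounds t : 0 <= indU t <= 1.
Proof. unfold indU; cdestr; lra. Qed.

Lemma V_bounds n : forall P s, wf_prog P -> 0 <= V n P s <= 1.
Proof.
  induction n; intros P s HP; cbn [V]; [lra|].
  destruct (minl_attain (fun l => vl (gV (V n)) l) _ (steps_nonempty P s)) as [l [Hl ->]].
  destruct (step_good P s l HP (steps_sound _ _ _ Hl)) as [Hg Ht].
  rewrite <- Ht. apply vl_bound. intros e He. destruct (Hg e He) as [H1 H2]. split; auto.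
  destruct (snd e) as [t|[P' t]]; simpl in *; [apply indU_bounds| apply IHn; auto].
Qed.

Lemma V_mono n : forall P s, wf_prog P -> V n P s <= V (S n) P s.
Proof.
  induction n; intros P s HP.
  - pose proof (V_bounds 1 P s HP). change (V 0 P s) with 0. lra.
  - cbn [V]. apply minl_mono; [apply steps_nonempty|].
    intros l Hl. destruct (step_good P s l HP (steps_sound _ _ _ Hl)) as [Hg Ht].
    apply vl_mono. intros e He. destruct (Hg e He) as [H1 H2]. split; auto.
    destruct (snd e) as [t|[P' t]]; simpl in *; [lra| apply IHn; auto].
Qed.

Lemma children_wf P s l c : wf_prog P -> stepL semA semB P s l ->
  (forall e, In e c -> 0 < fst e) -> (forall x, wt c x = wt l x) ->
  forall P' t, In (inr (P', t)) (map snd c) -> wf_prog P'.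
Proof.
  intros HP Hs Hc Hw P' t Hi.
  destruct (wt_pos c (inr (P', t)) Hc) as [_ H]. specialize (H Hi). rewrite Hw in H.
  destruct (classic (In (inr (P', t)) (map snd l))) as [Hl|Hl].
  - apply in_map_iff in Hl. destruct Hl as [e [He Hin]].
    destruct (step_good P s l HP Hs) as [Hg _]. destruct (Hg e Hin) as [_ Hwf].
    rewrite He in Hwf. exact Hwf.
  - rewrite wt_notin in H; auto. lra.
Qed.

Lemma combF_ge F G (c : fsum Ot) m : combF F c m -> (forall e, In e c -> 0 <= fst e) ->
  (forall P' t m', In (inr (P', t)) (map snd c) -> F P' t m' -> G P' t <= mass m' U) ->
  vl (gV G) c <= mass m U.
Proof.
  revert m; induction c as [|[q [t|[P' t]]] c IH]; simpl; intros m Hc Hn HF.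
  - subst; simpl; lra.
  - destruct Hc as [mu' [Hc ->]]. simpl. unfold indU.
    assert (vl (gV G) c <= mass mu' U) by (apply IH; auto).
    cdestr; lra.
  - destruct Hc as [m0 [mu' [H0 [Hc ->]]]]. rewrite mass_app, mass_scale.
    assert (vl (gV G) c <= mass mu' U) by (apply IH; auto).
    assert (G P' t <= mass m0 U) by (apply HF; auto).
    assert (0 <= q) by (apply (Hn (q, inr (P', t))); auto). simpl. nra.
Qed.

Lemma combF_le F G (c : fsum Ot) m : combF F c m -> (forall e, In e c -> 0 <= fst e) ->
  (forall P' t m', In (inr (P', t)) (map snd c) -> F P' t m' -> mass m' U <= G P' t) ->
  mass m U <= vl (gV G) c.
Proof.
  revert m; induction c as [|[q [t|[P' t]]] c IH]; simpl; intros m Hc Hn HF.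
  - subst; simpl; lra.
  - destruct Hc as [mu' [Hc ->]]. simpl. unfold indU.
    assert (mass mu' U <= vl (gV G) c) by (apply IH; auto).
    cdestr; lra.
  - destruct Hc as [m0 [mu' [H0 [Hc ->]]]]. rewrite mass_app, mass_scale.
    assert (mass mu' U <= vl (gV G) c) by (apply IH; auto).
    assert (mass m0 U <= G P' t) by (apply HF; auto).
    assert (0 <= q) by (apply (Hn (q, inr (P', t))); auto). simpl. nra.
Qed.

Lemma combF_ex F G (c : fsum Ot) :
  (forall P' t, In (inr (P', t)) (map snd c) -> exists m', F P' t m' /\ mass m' U = G P' t) ->
  exists m, combF F c m /\ mass m U = vl (gV G) c.
Proof.
  induction c as [|[q [t|[P' t]]] c IH]; simpl; intros HF.
  - exists []; split; auto.
  - destruct IH as [m [Hm Hmass]]; [intros; apply HF; auto|].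
    exists ((q, t) :: m). split; [exists m; auto|]. simpl. unfold indU. rewrite Hmass. cdestr; ring.
  - destruct IH as [m [Hm Hmass]]; [intros; apply HF; auto|].
    destruct (HF P' t) as [m0 [H0 H0m]]; auto.
    exists (scale q m0 ++ m). split; [exists m0, m; auto|].
    rewrite mass_app, mass_scale, Hmass, H0m. simpl. ring.
Qed.

Lemma combF_ex0 F (c : fsum Ot) :
  (forall P' t, In (inr (P', t)) (map snd c) -> exists m', F P' t m') ->
  exists m, combF F c m.
Proof.
  induction c as [|[q [t|[P' t]]] c IH]; simpl; intros HF.
  - exists []; auto.
  - destruct IH as [m Hm]; [intros; apply HF; auto|]. exists ((q, t) :: m). exists m; auto.
  - destruct IH as [m Hm]; [intros; apply HF; auto|].
    destruct (HF P' t) as [m0 H0]; auto.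
    exists (scale q m0 ++ m). exists m0, m; auto.
Qed.

Lemma Fn_ge n : forall P s mu, wf_prog P -> Fn semA semB n P s mu -> V n P s <= mass mu U.
Proof.
  induction n; intros P s mu HP H.
  - simpl in H. subst. simpl. lra.
  - destruct H as [l [c [Hl [[Hnd [Hpos Hw]] Hc]]]]. rewrite Forall_forall in Hpos.
    cbn [V]. eapply Rle_trans; [apply minl_le, in_map, steps_complete; eauto|].
    rewrite <- (vl_wt_eq _ c l) by auto.
    apply (combF_ge (Fn semA semB n)); auto.
    + intros e He; specialize (Hpos e He); lra.
    + intros P' t m' Hi HF. apply IHn; auto. eapply children_wf; eauto.
Qed.

Lemma Fn_ex n : forall P s, wf_prog P -> exists mu, Fn semA semB n P s mu /\ mass mu U = V n P s.
Proof.
  induction n; intros P s HP.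
  - exists []. split; reflexivity.
  - cbn [V]. destruct (minl_attain (fun l => vl (gV (V n)) l) _ (steps_nonempty P s)) as [l [Hl ->]].
    pose proof (steps_sound _ _ _ Hl) as Hs.
    destruct (step_good P s l HP Hs) as [Hg _].
    destruct (canon_ex l) as [c [Hnd [Hpos Hw]]]; [intros e He; apply Hg; auto|].
    pose proof Hpos as Hpos'. rewrite Forall_forall in Hpos'.
    destruct (combF_ex (Fn semA semB n) (V n) c) as [m [Hm Hmass]].
    { intros P' t Hi. apply IHn. eapply children_wf; eauto. }
    exists m. split.
    + exists l, c. repeat split; auto.
    + rewrite Hmass. apply vl_wt_eq; auto.
Qed.

Lemma combK_ge (G : R * (Ot -> R) -> fsum St -> Prop) ks mu x : combK G ks mu ->
  (forall k, In k ks -> 0 <= fst k /\ forall m, G k m -> x <= mass m U) ->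
  x * fold_right (fun k acc => fst k + acc) 0 ks <= mass mu U.
Proof.
  revert mu; induction ks as [|k ks IH]; simpl; intros mu Hc H.
  - subst; simpl; lra.
  - destruct Hc as [m [mu' [Hm [Hc ->]]]]. rewrite mass_app, mass_scale.
    destruct (H k) as [H1 H2]; auto. specialize (H2 m Hm).
    assert (x * fold_right (fun k acc => fst k + acc) 0 ks <= mass mu' U) by (apply IH; auto).
    nra.
Qed.

Lemma combK_le (G : R * (Ot -> R) -> fsum St -> Prop) ks mu g : combK G ks mu ->
  (forall k, In k ks -> 0 <= fst k /\ forall m, G k m ->
     exists c, (forall o, wt c o = snd k o) /\ mass m U <= vl g c) ->
  exists C, (forall o, wt C o = fold_right (fun k acc => fst k * snd k o + acc) 0 ks) /\
    mass mu U <= vl g C.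
Proof.
  revert mu; induction ks as [|k ks IH]; simpl; intros mu Hc H.
  - subst. exists []. split; simpl; intros; lra.
  - destruct Hc as [m [mu' [Hm [Hc ->]]]].
    destruct (H k) as [H1 H2]; auto. destruct (H2 m Hm) as [c [Hcw Hcm]].
    destruct (IH mu') as [C [HCw HCm]]; auto.
    exists (scale (fst k) c ++ C). split.
    + intros o. rewrite wt_app, wt_scale, Hcw, HCw. reflexivity.
    + rewrite mass_app, mass_scale, vl_app, vl_scale. nra.
Qed.

Lemma big_ge sch n : forall h P s mu, wf_prog P -> bigstep semA semB sch n h P s mu ->
  V n P s <= mass mu U.
Proof.
  induction n; intros h P s mu HP H.
  - simpl in H. subst. simpl. lra.
  - destruct H as [nu [ks [Hsch [[Hks [Hsum Hnu]] HK]]]].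
    rewrite Forall_forall in Hks.
    pose proof (combK_ge _ ks mu (V (S n) P s) HK) as Hge.
    rewrite Hsum, Rmult_1_r in Hge. apply Hge.
    intros k Hk. destruct (Hks k Hk) as [Hk0 [lk [Hlk Hlkw]]]. split; auto.
    intros m [c [[Hnd [Hpos Hw]] Hc]]. rewrite Forall_forall in Hpos.
    assert (Hwc : forall x, wt c x = wt lk x) by (intros; rewrite Hw, Hlkw; auto).
    cbn [V]. eapply Rle_trans; [apply minl_le, in_map, steps_complete; eauto|].
    rewrite <- (vl_wt_eq _ c lk) by auto.
    eapply combF_ge; eauto.
    + intros e He; specialize (Hpos e He); lra.
    + intros P' t m' Hi HF. eapply IHn; [|eauto]. eapply children_wf; eauto.
Qed.

Definition E (P : Pr) (s : St) : R -> Prop := fun x => exists n, x = V n P s.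

Definition W (P : Pr) (s : St) : R :=
  match excluded_middle_informative (bound (E P s)) with
  | left Hb => proj1_sig (completeness (E P s) Hb (ex_intro _ (V 0 P s) (ex_intro _ 0%nat eq_refl)))
  | right _ => 0
  end.

Lemma W_lub P s : wf_prog P -> is_lub (E P s) (W P s).
Proof.
  intros HP. unfold W. destruct excluded_middle_informative as [Hb|Hb].
  - exact (proj2_sig _).
  - exfalso; apply Hb. exists 1. intros x [n ->]. apply V_bounds; auto.
Qed.

Lemma V_le_W n P s : wf_prog P -> V n P s <= W P s.
Proof. intros HP. apply (W_lub P s HP). exists n; auto. Qed.

Lemma W_approx P s : wf_prog P -> approx (fun n => V n P s) (W P s).
Proof.
  intros HP. split; [intros; apply V_le_W; auto|]. split; [intros; apply V_mono; auto|].
  intros eps He. destruct (classic (exists n, W P s - eps < V n P s)) as [H|H]; auto.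
  exfalso. assert (W P s <= W P s - eps); [|lra].
  apply (W_lub P s HP). intros x [n ->]. apply Rnot_lt_le. intros Hlt. apply H; eauto.
Qed.

Lemma approx_vl l : (forall e, In e l -> 0 <= fst e /\ wfo (snd e)) ->
  approx (fun n => vl (gV (V n)) l) (vl (gV W) l).
Proof.
  induction l as [|e l IH]; intros H.
  - exact (approx_const 0).
  - simpl. destruct (H e) as [H1 H2]; [simpl; auto|].
    apply (approx_plus (fun n => fst e * gV (V n) (snd e)) (fun n => vl (gV (V n)) l)).
    + apply (approx_scale (fun n => gV (V n) (snd e))); auto.
      destruct (snd e) as [t|[P' t]]; simpl in *; [apply approx_const| apply W_approx; auto].
    + apply IH. intros; apply H; simpl; auto.
Qed.

Lemma bellman P s : wf_prog P -> exists l, In l (steps P s) /\ vl (gV W) l <= W P s.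
Proof.
  intros HP. destruct (classic (exists l, In l (steps P s) /\ vl (gV W) l <= W P s)) as [H|H]; auto.
  exfalso.
  assert (Hap : forall l, In l (steps P s) -> approx (fun n => vl (gV (V n)) l) (vl (gV W) l)).
  { intros l Hl. apply approx_vl. apply (step_good P s l HP (steps_sound _ _ _ Hl)). }
  destruct (common_N (steps P s) (fun n l => In l (steps P s) -> W P s < vl (gV (V n)) l)) as [N HN].
  - intros n m a Hnm Hq Ha. specialize (Hq Ha).
    pose proof (approx_mono _ _ n m (Hap a Ha) Hnm). lra.
  - intros l Hl. assert (Hgt : W P s < vl (gV W) l).
    { apply Rnot_le_lt. intros Hle. apply H; eauto. }
    destruct (Hap l Hl) as [_ [_ H3]].
    destruct (H3 (vl (gV W) l - W P s)) as [n Hn]; [lra|].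
    exists n. intros _. lra.
  - pose proof (V_le_W (S N) P s HP) as HV. cbn [V] in HV.
    destruct (minl_attain (fun l => vl (gV (V N)) l) _ (steps_nonempty P s)) as [l [Hl Heq]].
    rewrite Heq in HV. specialize (HN l Hl Hl). lra.
Qed.

Definition lstar (P : Pr) (s : St) : fsum Ot :=
  match excluded_middle_informative (exists l, In l (steps P s) /\ vl (gV W) l <= W P s) with
  | left H => proj1_sig (constructive_indefinite_description _ H)
  | right _ => hd [] (steps P s)
  end.

Lemma lstar_in P s : In (lstar P s) (steps P s).
Proof.
  unfold lstar. destruct excluded_middle_informative as [H|H].
  - exact (proj1 (proj2_sig (constructive_indefinite_description _ H))).
  - pose proof (steps_nonempty P s). destruct (steps P s); [congruence|left; auto].
Qed.

Lemma lstar_le P s : wf_prog P -> vl (gV W) (lstar P s) <= W P s.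
Proof.
  intros HP. unfold lstar. destruct excluded_middle_informative as [H|H].
  - exact (proj2 (proj2_sig (constructive_indefinite_description _ H))).
  - exfalso; apply H, bellman; auto.
Qed.

Definition sch0 : Sched Act Test St := fun h P s => Some (wt (lstar P s)).

Lemma conv_single P s : convex_comb semA semB [(1, wt (lstar P s))] P s (wt (lstar P s)).
Proof.
  split; [|split].
  - constructor; [|constructor]. split; [simpl; lra|].
    exists (lstar P s). split; [apply steps_sound, lstar_in| reflexivity].
  - simpl; ring.
  - intros o; simpl; ring.
Qed.

Lemma sch0_valid : valid_sched semA semB sch0.
Proof.
  intros h P s nu H. unfold sch0 in H. injection H as <-.
  exists [(1, wt (lstar P s))]. apply conv_single.
Qed.

Lemma sch0_nb n : forall h P s, wf_prog P -> exists mu, bigstep semA semB sch0 n h P s mu.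
Proof.
  induction n; intros h P s HP.
  - exists []; reflexivity.
  - pose proof (steps_sound _ _ _ (lstar_in P s)) as Hs.
    destruct (step_good P s _ HP Hs) as [Hg _].
    destruct (canon_ex (lstar P s)) as [c Hc]; [intros e He; apply Hg; auto|].
    pose proof Hc as [Hnd [Hpos Hw]]. rewrite Forall_forall in Hpos.
    destruct (combF_ex0 (fun P' t m => bigstep semA semB sch0 n
        (h ++ [((P, s), wt (lstar P s))]) P' t m) c) as [m Hm].
    { intros P' t Hi. apply IHn. eapply children_wf; eauto. }
    exists (scale 1 m ++ []).
    exists (wt (lstar P s)), [(1, wt (lstar P s))]. split; [reflexivity|].
    split; [apply conv_single|].
    exists m, []. split; [|split; [reflexivity|reflexivity]].
    exists c. split; auto.
Qed.

Lemma big_le n : forall h P s mu, wf_prog P -> bigstep semA semB sch0 n h P s mu ->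
  mass mu U <= W P s.
Proof.
  induction n; intros h P s mu HP H.
  - simpl in H. subst. simpl. pose proof (V_le_W 0 P s HP). simpl in H. lra.
  - destruct H as [nu [ks [Hsch [[Hks [Hsum Hnu]] HK]]]].
    unfold sch0 in Hsch. injection Hsch as Hsch.
    rewrite Forall_forall in Hks.
    destruct (combK_le _ ks mu (gV W) HK) as [C [HCw HCm]].
    + intros k Hk. destruct (Hks k Hk) as [Hk0 [lk [Hlk Hlkw]]]. split; auto.
      intros m [c [[Hnd [Hpos Hw]] Hc]]. rewrite Forall_forall in Hpos.
      exists c. split; auto.
      assert (Hwc : forall x, wt c x = wt lk x) by (intros; rewrite Hw, Hlkw; auto).
      eapply combF_le; eauto.
      * intros e He; specialize (Hpos e He); lra.
      * intros P' t m' Hi HF. eapply IHn; [|eauto]. eapply children_wf; eauto.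
    + eapply Rle_trans; [exact HCm|]. rewrite (vl_wt_eq _ C (lstar P s)).
      * apply lstar_le; auto.
      * intros o. rewrite HCw, <- Hnu, Hsch. reflexivity.
Qed.

Theorem main_sec (P : Pr) (HP : wf_prog P) (s : St) (p : R) :
  sat_box semA semB P s U p <->
  exists n : nat, forall mu, Fn semA semB n P s mu -> mass mu U > p.
Proof.
  split.
  - intros Hsat.
    destruct (classic (exists n : nat, forall mu, Fn semA semB n P s mu -> mass mu U > p)) as [H|H]; auto.
    exfalso.
    assert (HV : forall n, V n P s <= p).
    { intros n. destruct (Fn_ex n P s HP) as [mu [Hmu Hm]].
      rewrite <- Hm. apply Rnot_lt_le. intros Hlt. apply H. exists n.
      intros mu' Hmu'. pose proof (Fn_ge n P s mu' HP Hmu'). lra. }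
    assert (HW : W P s <= p).
    { apply (W_lub P s HP). intros x [n ->]. auto. }
    destruct (Hsat sch0 sch0_valid) as [n [mu [Hb Hm]]].
    + intros n. apply sch0_nb; auto.
    + pose proof (big_le n [] P s mu HP Hb). lra.
  - intros [n Hn] sch Hv Hnb. destruct (Hnb n) as [mu Hmu]. exists n, mu. split; auto.
    destruct (Fn_ex n P s HP) as [mu0 [H0 H0m]].
    pose proof (Hn mu0 H0). pose proof (big_ge sch n [] P s mu HP Hmu). lra.
Qed.

End Main.


Theorem mainTheorem11 (Act Test St : Type)
  (semA : Act -> St -> fsum St) (semB : Test -> St -> bool)
  (HsemA : forall a s, is_prob (semA a s))
  (P : Prog Act Test) (HP : wf_prog P)
  (s : St) (U : St -> Prop) (p : Q) (Hp : 0 <= Q2R p < 1) :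
  sat_box semA semB P s U (Q2R p) <->
  exists n : nat, forall mu, Fn semA semB n P s mu -> mass mu U > Q2R p.
Proof.
  exact (main_sec Act Test St semA semB HsemA U P HP s (Q2R p)).
Qed.
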